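(* Let $A$ be a category with a variance $(E,M)$ and let $C$ be a category. For every functor $F\colon A\rightarrow C$ of variance $(E,M)$, the restriction $F|_E$ is a covariant functor $E\rightarrow C$, the restriction $F|_M$ is a contravariant functor $M\rightarrow C$, and $(F|_E,F|_M)$ is a compatible pair. Moreover, the assignment $F\mapsto (F|_E,F|_M)$ is a bijection from the functors $A\rightarrow C$ of variance $(E,M)$ onto the compatible pairs $(G\colon E\rightarrow C,\ H\colon M\rightarrow C)$.
   Context: A strict factorization system on a category $A$ is a pair $(E,M)$ of subcategories of $A$, both containing all objects of $A$, such that every morphism $f$ of $A$ factors uniquely as $f=me$ with $e$ in $E$ and $m$ in $M$. A variance on $A$ is a pair $(E,M)$ such that both $(E,M)$ and $(M,E)$ are strict factorization systems. For $f\colon x\rightarrow y$ in $A$ write $f=f^m f^e$ with $f^e\colon x\rightarrow f_t$ in $E$, $f^m\colon f_t\rightarrow y$ in $M$, and $f=f_e f_m$ with $f_m\colon x\rightarrow f_s$ in $M$, $f_e\colon f_s\rightarrow y$ in $E$. (For $f$ in $E$: $f_s=x$, $f_t=y$; for $f$ in $M$: $f_s=y$, $f_t=x$.) A functor $F\colon A\rightarrow C$ of variance $(E,M)$ consists of a function $F$ on objects and a function $F$ on morphisms such that: $F$ sends identities to identities; for every morphism $f$ of $A$, $F(f)$ is a morphism $F(f_s)\rightarrow F(f_t)$; and for all composable morphisms $x\xrightarrow{f}y\xrightarrow{g}z$ of $A$, $$F(gf)=F((g^ef^m)^e)\,F(f)\,F((g_mf_e)_m)\quad\text{and}\quad F(gf)=F((g^ef^m)^m)\,F(g)\,F((g_mf_e)_e).$$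 A compatible pair consists of a covariant functor $G\colon E\rightarrow C$ and a contravariant functor $H\colon M\rightarrow C$ which agree on objects and satisfy $G(f^e)H(f_m)=H(f^m)G(f_e)$ for every morphism $f$ of $A$. *)

(* Defs.v *)
(* Categories are presented in single-sorted form:
   a type of objects, a type of morphisms with domain/codomain maps,
   identities and a (total) composition operator whose laws are only
   required on composable pairs. *)
From Stdlib Require Import ClassicalEpsilon.

Record Cat := {
  Ob : Type;
  Mor : Type;
  dom : Mor -> Ob;
  cod : Mor -> Ob;
  idm : Ob -> Mor;
  comp : Mor -> Mor -> Mor;               (* comp g f = g o f *)
  dom_idm : forall x, dom (idm x) = x;
  cod_idm : forall x, cod (idm x) = x;
  dom_comp : forall f g, cod f = dom g -> dom (comp g f) = dom f;
  cod_comp : forall f g, cod f = dom g -> cod (comp g f) = cod g;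
  comp_idl : forall f, comp (idm (cod f)) f = f;
  comp_idr : forall f, comp f (idm (dom f)) = f;
  comp_assoc : forall f g h, cod f = dom g -> cod g = dom h ->
    comp h (comp g f) = comp (comp h g) f
}.

Arguments dom {c} _.
Arguments cod {c} _.
Arguments idm {c} _.
Arguments comp {c} _ _.

(* A subcategory containing all objects: a class of morphisms containing
   all identities and closed under composition. *)
Definition Subcat (A : Cat) (P : Mor A -> Prop) : Prop :=
  (forall x : Ob A, P (idm x)) /\
  (forall f g : Mor A, cod f = dom g -> P f -> P g -> P (comp g f)).

Definition SFS (A : Cat) (X Y : Mor A -> Prop) : Prop :=
  Subcat A X /\ Subcat A Y /\
  forall f : Mor A, exists! p : Mor A * Mor A,
    X (fst p) /\ Y (snd p) /\ cod (fst p) = dom (snd p) /\ comp (snd p) (fst p) = f.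

Definition Variance (A : Cat) (E M : Mor A -> Prop) : Prop :=
  SFS A E M /\ SFS A M E.

Definition fac {A : Cat} {X Y : Mor A -> Prop} (h : SFS A X Y) (f : Mor A)
  : Mor A * Mor A :=
  proj1_sig (constructive_indefinite_description _ (proj2 (proj2 h) f)).

Lemma fac_spec {A : Cat} {X Y : Mor A -> Prop} (h : SFS A X Y) (f : Mor A) :
  X (fst (fac h f)) /\ Y (snd (fac h f)) /\
  cod (fst (fac h f)) = dom (snd (fac h f)) /\
  comp (snd (fac h f)) (fst (fac h f)) = f.
Proof.
  unfold fac. exact (proj1 (proj2_sig (constructive_indefinite_description _ (proj2 (proj2 h) f)))).
Qed.

Section VarianceOps.
Context {A : Cat} {E M : Mor A -> Prop} (hV : Variance A E M).

(* f = f^m o f^e  with f^e in E, f^m in M *)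
Definition up_e (f : Mor A) : Mor A := fst (fac (proj1 hV) f).
Definition up_m (f : Mor A) : Mor A := snd (fac (proj1 hV) f).
(* f = f_e o f_m  with f_m in M, f_e in E *)
Definition lo_m (f : Mor A) : Mor A := fst (fac (proj2 hV) f).
Definition lo_e (f : Mor A) : Mor A := snd (fac (proj2 hV) f).
(* f_t = target of f^e, f_s = target of f_m *)
Definition obj_t (f : Mor A) : Ob A := cod (up_e f).
Definition obj_s (f : Mor A) : Ob A := cod (lo_m f).

Lemma up_e_E f : E (up_e f). Proof. exact (proj1 (fac_spec (proj1 hV) f)). Qed.
Lemma up_m_M f : M (up_m f). Proof. exact (proj1 (proj2 (fac_spec (proj1 hV) f))). Qed.
Lemma lo_m_M f : M (lo_m f). Proof. exact (proj1 (fac_spec (proj2 hV) f)). Qed.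
Lemma lo_e_E f : E (lo_e f). Proof. exact (proj1 (proj2 (fac_spec (proj2 hV) f))). Qed.

End VarianceOps.

Definition IsVarFunctor {A C : Cat} {E M : Mor A -> Prop} (hV : Variance A E M)
  (F0 : Ob A -> Ob C) (F1 : Mor A -> Mor C) : Prop :=
  (forall x : Ob A, F1 (idm x) = idm (F0 x)) /\
  (forall f : Mor A, dom (F1 f) = F0 (obj_s hV f) /\ cod (F1 f) = F0 (obj_t hV f)) /\
  (forall f g : Mor A, cod f = dom g ->
     F1 (comp g f) =
       comp (F1 (up_e hV (comp (up_e hV g) (up_m hV f))))
            (comp (F1 f) (F1 (lo_m hV (comp (lo_m hV g) (lo_e hV f))))) /\
     F1 (comp g f) =
       comp (F1 (up_m hV (comp (up_e hV g) (up_m hV f))))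
            (comp (F1 g) (F1 (lo_e hV (comp (lo_m hV g) (lo_e hV f)))))).

Definition IsCovFunctor {A C : Cat} (P : Mor A -> Prop)
  (G0 : Ob A -> Ob C) (G1 : {f : Mor A | P f} -> Mor C) : Prop :=
  (forall f : {f : Mor A | P f},
     dom (G1 f) = G0 (dom (proj1_sig f)) /\ cod (G1 f) = G0 (cod (proj1_sig f))) /\
  (forall x (hx : P (idm x)), G1 (exist _ (idm x) hx) = idm (G0 x)) /\
  (forall f g (hf : P f) (hg : P g) (hgf : P (comp g f)), cod f = dom g ->
     G1 (exist _ (comp g f) hgf) = comp (G1 (exist _ g hg)) (G1 (exist _ f hf))).

Definition IsContraFunctor {A C : Cat} (P : Mor A -> Prop)
  (H0 : Ob A -> Ob C) (H1 : {f : Mor A | P f} -> Mor C) : Prop :=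
  (forall f : {f : Mor A | P f},
     dom (H1 f) = H0 (cod (proj1_sig f)) /\ cod (H1 f) = H0 (dom (proj1_sig f))) /\
  (forall x (hx : P (idm x)), H1 (exist _ (idm x) hx) = idm (H0 x)) /\
  (forall f g (hf : P f) (hg : P g) (hgf : P (comp g f)), cod f = dom g ->
     H1 (exist _ (comp g f) hgf) = comp (H1 (exist _ f hf)) (H1 (exist _ g hg))).

Definition IsCompatiblePair {A C : Cat} {E M : Mor A -> Prop} (hV : Variance A E M)
  (O : Ob A -> Ob C) (G1 : {f : Mor A | E f} -> Mor C)
  (H1 : {f : Mor A | M f} -> Mor C) : Prop :=
  IsCovFunctor E O G1 /\ IsContraFunctor M O H1 /\
  forall f : Mor A,
    comp (G1 (exist _ (up_e hV f) (up_e_E hV f))) (H1 (exist _ (lo_m hV f) (lo_m_M hV f)))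
    = comp (H1 (exist _ (up_m hV f) (up_m_M hV f))) (G1 (exist _ (lo_e hV f) (lo_e_E hV f))).

Definition restr {A C : Cat} (P : Mor A -> Prop) (F1 : Mor A -> Mor C)
  : {f : Mor A | P f} -> Mor C :=
  fun p => F1 (proj1_sig p).

(* Main.v *)
Require Import Defs.
From Stdlib Require Import FunctionalExtensionality ProofIrrelevance.

Lemma fac_uniq {A : Cat} {X Y : Mor A -> Prop} (h : SFS A X Y) f a b :
  X a -> Y b -> cod a = dom b -> comp b a = f -> fac h f = (a, b).
Proof.
  intros Ha Hb Hc He. pose proof (fac_spec h f) as Hs.
  destruct (proj2 (proj2 h) f) as [p [_ Hu]].
  transitivity p; [symmetry|]; apply Hu; simpl; auto.
Qed.

Lemma assoc4 (C : Cat) (a b c d : Mor C) :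
  cod d = dom c -> cod c = dom b -> cod b = dom a ->
  comp (comp a b) (comp c d) = comp a (comp (comp b c) d).
Proof.
  intros H1 H2 H3.
  rewrite <- (comp_assoc C (comp c d) b a); [| rewrite cod_comp; auto | auto].
  f_equal. apply comp_assoc; auto.
Qed.

Section Var.
Variables (A : Cat) (E M : Mor A -> Prop) (hV : Variance A E M).

Lemma E_id x : E (idm x). Proof. exact (proj1 (proj1 (proj1 hV)) x). Qed.
Lemma M_id x : M (idm x). Proof. exact (proj1 (proj1 (proj2 (proj1 hV))) x). Qed.
Lemma E_comp f g : cod f = dom g -> E f -> E g -> E (comp g f).
Proof. exact (proj2 (proj1 (proj1 hV)) f g). Qed.
Lemma M_comp f g : cod f = dom g -> M f -> M g -> M (comp g f).
Proof. exact (proj2 (proj1 (proj2 (proj1 hV))) f g). Qed.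

Lemma up_eq f a b : E a -> M b -> cod a = dom b -> comp b a = f ->
  up_e hV f = a /\ up_m hV f = b.
Proof. intros. unfold up_e, up_m. rewrite (fac_uniq (proj1 hV) f a b); auto. Qed.
Lemma lo_eq f a b : M a -> E b -> cod a = dom b -> comp b a = f ->
  lo_m hV f = a /\ lo_e hV f = b.
Proof. intros. unfold lo_m, lo_e. rewrite (fac_uniq (proj2 hV) f a b); auto. Qed.

Lemma up_cod f : cod (up_e hV f) = dom (up_m hV f).
Proof. exact (proj1 (proj2 (proj2 (fac_spec (proj1 hV) f)))). Qed.
Lemma up_comp f : comp (up_m hV f) (up_e hV f) = f.
Proof. exact (proj2 (proj2 (proj2 (fac_spec (proj1 hV) f)))). Qed.
Lemma lo_cod f : cod (lo_m hV f) = dom (lo_e hV f).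
Proof. exact (proj1 (proj2 (proj2 (fac_spec (proj2 hV) f)))). Qed.
Lemma lo_comp f : comp (lo_e hV f) (lo_m hV f) = f.
Proof. exact (proj2 (proj2 (proj2 (fac_spec (proj2 hV) f)))). Qed.

Lemma up_dom f : dom (up_e hV f) = dom f.
Proof. rewrite <- (up_comp f) at 2. rewrite dom_comp; auto using up_cod. Qed.
Lemma up_codm f : cod (up_m hV f) = cod f.
Proof. rewrite <- (up_comp f) at 2. rewrite cod_comp; auto using up_cod. Qed.
Lemma lo_dom f : dom (lo_m hV f) = dom f.
Proof. rewrite <- (lo_comp f) at 2. rewrite dom_comp; auto using lo_cod. Qed.
Lemma lo_code f : cod (lo_e hV f) = cod f.
Proof. rewrite <- (lo_comp f) at 2. rewrite cod_comp; auto using lo_cod. Qed.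

Lemma up_E f : E f -> up_e hV f = f /\ up_m hV f = idm (cod f).
Proof. intros. apply up_eq; auto using M_id. rewrite dom_idm; auto. apply comp_idl. Qed.
Lemma lo_E f : E f -> lo_m hV f = idm (dom f) /\ lo_e hV f = f.
Proof. intros. apply lo_eq; auto using M_id. rewrite cod_idm; auto. apply comp_idr. Qed.
Lemma up_M f : M f -> up_e hV f = idm (dom f) /\ up_m hV f = f.
Proof. intros. apply up_eq; auto using E_id. rewrite cod_idm; auto. apply comp_idr. Qed.
Lemma lo_M f : M f -> lo_m hV f = f /\ lo_e hV f = idm (cod f).
Proof. intros. apply lo_eq; auto using E_id. rewrite dom_idm; auto. apply comp_idl. Qed.

Lemma up_gf f g : cod f = dom g ->
  let u := comp (up_e hV g) (up_m hV f) in
  up_e hV (comp g f) = comp (up_e hV u) (up_e hV f) /\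
  up_m hV (comp g f) = comp (up_m hV g) (up_m hV u).
Proof.
  intros Hfg u.
  assert (Hu1 : cod (up_m hV f) = dom (up_e hV g)) by (rewrite up_codm, up_dom; auto).
  assert (Hdu : dom u = dom (up_m hV f)) by (apply dom_comp; auto).
  assert (Hcu : cod u = cod (up_e hV g)) by (apply cod_comp; auto).
  assert (H1 : cod (up_e hV f) = dom (up_e hV u)) by (rewrite up_dom, Hdu; apply up_cod).
  assert (H2 : cod (up_m hV u) = dom (up_m hV g)) by (rewrite up_codm, Hcu; apply up_cod).
  apply up_eq.
  - apply E_comp; [exact H1 | apply up_e_E | apply up_e_E].
  - apply M_comp; [exact H2 | apply up_m_M | apply up_m_M].
  - rewrite cod_comp, dom_comp; auto using up_cod.
  - rewrite assoc4; auto using up_cod.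
    rewrite up_comp. unfold u.
    rewrite <- (comp_assoc A (up_e hV f) (up_m hV f) (up_e hV g)); [|apply up_cod|exact Hu1].
    rewrite up_comp.
    rewrite (comp_assoc A f (up_e hV g) (up_m hV g)); [|rewrite up_dom; auto|apply up_cod]. rewrite up_comp; auto.
Qed.

Lemma lo_gf f g : cod f = dom g ->
  let v := comp (lo_m hV g) (lo_e hV f) in
  lo_m hV (comp g f) = comp (lo_m hV v) (lo_m hV f) /\
  lo_e hV (comp g f) = comp (lo_e hV g) (lo_e hV v).
Proof.
  intros Hfg v.
  assert (Hu1 : cod (lo_e hV f) = dom (lo_m hV g)) by (rewrite lo_code, lo_dom; auto).
  assert (Hdu : dom v = dom (lo_e hV f)) by (apply dom_comp; auto).
  assert (Hcu : cod v = cod (lo_m hV g)) by (apply cod_comp; auto).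
  assert (H1 : cod (lo_m hV f) = dom (lo_m hV v)) by (rewrite lo_dom, Hdu; apply lo_cod).
  assert (H2 : cod (lo_e hV v) = dom (lo_e hV g)) by (rewrite lo_code, Hcu; apply lo_cod).
  apply lo_eq.
  - apply M_comp; [exact H1 | apply lo_m_M | apply lo_m_M].
  - apply E_comp; [exact H2 | apply lo_e_E | apply lo_e_E].
  - rewrite cod_comp, dom_comp; auto using lo_cod.
  - rewrite assoc4; auto using lo_cod.
    rewrite lo_comp. unfold v.
    rewrite <- (comp_assoc A (lo_m hV f) (lo_e hV f) (lo_m hV g)); [|apply lo_cod|exact Hu1].
    rewrite lo_comp.
    rewrite (comp_assoc A f (lo_m hV g) (lo_e hV g)); [|rewrite lo_dom; auto|apply lo_cod]. rewrite lo_comp; auto.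
Qed.

End Var.

Lemma comp_idl' (C : Cat) (X : Mor C) y : cod X = y -> comp (idm y) X = X.
Proof. intros <-; apply comp_idl. Qed.
Lemma comp_idr' (C : Cat) (X : Mor C) y : dom X = y -> comp X (idm y) = X.
Proof. intros <-; apply comp_idr. Qed.

Section Idm.
Variables (A : Cat) (E M : Mor A -> Prop) (hV : Variance A E M).
Lemma up_e_id x : up_e hV (idm x) = idm x.
Proof. apply (proj1 (up_E A E M hV _ (E_id A E M hV x))). Qed.
Lemma lo_m_id x : lo_m hV (idm x) = idm x.
Proof. apply (proj1 (lo_M A E M hV _ (M_id A E M hV x))). Qed.
End Idm.

Section Fwd.
Variables (A C : Cat) (E M : Mor A -> Prop) (hV : Variance A E M)
  (F0 : Ob A -> Ob C) (F1 : Mor A -> Mor C) (HF : IsVarFunctor hV F0 F1).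

Lemma FE_dc a : E a -> dom (F1 a) = F0 (dom a) /\ cod (F1 a) = F0 (cod a).
Proof.
  intros Ha. destruct HF as [_ [Hdc _]]. destruct (Hdc a) as [H1 H2].
  rewrite H1, H2. unfold obj_s, obj_t.
  destruct (up_E A E M hV a Ha) as [-> _]. destruct (lo_E A E M hV a Ha) as [-> _].
  rewrite cod_idm; auto.
Qed.
Lemma FM_dc a : M a -> dom (F1 a) = F0 (cod a) /\ cod (F1 a) = F0 (dom a).
Proof.
  intros Ha. destruct HF as [_ [Hdc _]]. destruct (Hdc a) as [H1 H2].
  rewrite H1, H2. unfold obj_s, obj_t.
  destruct (up_M A E M hV a Ha) as [-> _]. destruct (lo_M A E M hV a Ha) as [-> _].
  rewrite cod_idm; auto.
Qed.

Lemma F_decomp1 f : F1 f = comp (F1 (up_e hV f)) (F1 (lo_m hV f)).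
Proof.
  destruct HF as [Hid [_ Hcomp]].
  destruct (Hcomp _ _ (up_cod A E M hV f)) as [Hc _].
  rewrite up_comp in Hc. rewrite Hc.
  destruct (up_M A E M hV _ (up_m_M hV f)) as [-> _].
  destruct (up_E A E M hV _ (up_e_E hV f)) as [_ ->].
  destruct (lo_M A E M hV _ (up_m_M hV f)) as [-> _].
  destruct (lo_E A E M hV _ (up_e_E hV f)) as [_ ->].
  rewrite up_comp, up_cod, comp_idl', up_e_id, Hid.
  2: apply cod_idm.
  apply comp_idl'.
  rewrite cod_comp.
  - rewrite (proj2 (FE_dc _ (up_e_E hV f))). rewrite up_cod; auto.
  - rewrite (proj2 (FM_dc _ (lo_m_M hV f))), (proj1 (FE_dc _ (up_e_E hV f))).
    rewrite lo_dom, up_dom; auto.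
Qed.

Lemma F_decomp2 f : F1 f = comp (F1 (up_m hV f)) (F1 (lo_e hV f)).
Proof.
  destruct HF as [Hid [_ Hcomp]].
  destruct (Hcomp _ _ (lo_cod A E M hV f)) as [_ Hc].
  rewrite lo_comp in Hc. rewrite Hc.
  destruct (up_E A E M hV _ (lo_e_E hV f)) as [-> _].
  destruct (up_M A E M hV _ (lo_m_M hV f)) as [_ ->].
  destruct (lo_E A E M hV _ (lo_e_E hV f)) as [-> _].
  destruct (lo_M A E M hV _ (lo_m_M hV f)) as [_ ->].
  rewrite lo_comp, <- lo_cod, comp_idl'.
  2: apply cod_idm.
  destruct (lo_M A E M hV _ (M_id A E M hV (cod (lo_m hV f)))) as [_ ->].
  rewrite cod_idm, Hid.
  rewrite comp_idr'; auto.
  rewrite (proj1 (FE_dc _ (lo_e_E hV f))), lo_cod; auto.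
Qed.
End Fwd.

Section Bwd.
Variables (A C : Cat) (E M : Mor A -> Prop) (hV : Variance A E M)
  (O : Ob A -> Ob C) (G1 : {f : Mor A | E f} -> Mor C)
  (H1 : {f : Mor A | M f} -> Mor C) (HP : IsCompatiblePair hV O G1 H1).

Definition FF (f : Mor A) : Mor C :=
  comp (G1 (exist _ (up_e hV f) (up_e_E hV f))) (H1 (exist _ (lo_m hV f) (lo_m_M hV f))).

Lemma Gext a b (ha : E a) (hb : E b) : a = b -> G1 (exist _ a ha) = G1 (exist _ b hb).
Proof. intros <-. f_equal. f_equal. apply proof_irrelevance. Qed.
Lemma Hext a b (ha : M a) (hb : M b) : a = b -> H1 (exist _ a ha) = H1 (exist _ b hb).
Proof. intros <-. f_equal. f_equal. apply proof_irrelevance. Qed.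

Lemma G_dc a (ha : E a) : dom (G1 (exist _ a ha)) = O (dom a) /\ cod (G1 (exist _ a ha)) = O (cod a).
Proof. exact (proj1 (proj1 HP) (exist _ a ha)). Qed.
Lemma H_dc a (ha : M a) : dom (H1 (exist _ a ha)) = O (cod a) /\ cod (H1 (exist _ a ha)) = O (dom a).
Proof. exact (proj1 (proj1 (proj2 HP)) (exist _ a ha)). Qed.
Lemma G_id x h : G1 (exist _ (idm x) h) = idm (O x).
Proof. exact (proj1 (proj2 (proj1 HP)) x h). Qed.
Lemma H_id x h : H1 (exist _ (idm x) h) = idm (O x).
Proof. exact (proj1 (proj2 (proj1 (proj2 HP))) x h). Qed.
Lemma G_comp f g hf hg hgf : cod f = dom g ->
  G1 (exist _ (comp g f) hgf) = comp (G1 (exist _ g hg)) (G1 (exist _ f hf)).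
Proof. exact (proj2 (proj2 (proj1 HP)) f g hf hg hgf). Qed.
Lemma H_comp f g hf hg hgf : cod f = dom g ->
  H1 (exist _ (comp g f) hgf) = comp (H1 (exist _ f hf)) (H1 (exist _ g hg)).
Proof. exact (proj2 (proj2 (proj1 (proj2 HP))) f g hf hg hgf). Qed.

Lemma FF_E a (ha : E a) : FF a = G1 (exist _ a ha).
Proof.
  unfold FF. destruct (up_E A E M hV a ha) as [Hu _]. destruct (lo_E A E M hV a ha) as [Hl _].
  rewrite (Gext _ _ _ ha Hu).
  rewrite (Hext _ _ _ (M_id A E M hV (dom a)) Hl), H_id.
  apply comp_idr'. apply G_dc.
Qed.
Lemma FF_M a (ha : M a) : FF a = H1 (exist _ a ha).
Proof.
  unfold FF. destruct (up_M A E M hV a ha) as [Hu _]. destruct (lo_M A E M hV a ha) as [Hl _].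
  rewrite (Hext _ _ _ ha Hl).
  rewrite (Gext _ _ _ (E_id A E M hV (dom a)) Hu), G_id.
  apply comp_idl'. apply H_dc.
Qed.
Lemma FF_alt f : FF f =
  comp (H1 (exist _ (up_m hV f) (up_m_M hV f))) (G1 (exist _ (lo_e hV f) (lo_e_E hV f))).
Proof. exact (proj2 (proj2 HP) f). Qed.

Lemma FF_comp1 f g : cod f = dom g ->
  FF (comp g f) = comp (FF (up_e hV (comp (up_e hV g) (up_m hV f))))
            (comp (FF f) (FF (lo_m hV (comp (lo_m hV g) (lo_e hV f))))).
Proof.
  intros Hfg.
  pose proof (up_gf A E M hV f g Hfg) as Hup. pose proof (lo_gf A E M hV f g Hfg) as Hlo.
  cbv zeta in Hup, Hlo. destruct Hup as [Hue _]. destruct Hlo as [Hlm _].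
  set (u := comp (up_e hV g) (up_m hV f)) in *.
  set (v := comp (lo_m hV g) (lo_e hV f)) in *.
  assert (Hu1 : cod (up_m hV f) = dom (up_e hV g)) by (rewrite up_codm, up_dom; auto).
  assert (Hdu : dom u = dom (up_m hV f)) by (apply dom_comp; auto).
  assert (H1c : cod (up_e hV f) = dom (up_e hV u)) by (rewrite up_dom, Hdu; apply up_cod).
  assert (Hl1 : cod (lo_e hV f) = dom (lo_m hV g)) by (rewrite lo_code, lo_dom; auto).
  assert (Hdv : dom v = dom (lo_e hV f)) by (apply dom_comp; auto).
  assert (H1l : cod (lo_m hV f) = dom (lo_m hV v)) by (rewrite lo_dom, Hdv; apply lo_cod).
  rewrite (FF_E _ (up_e_E hV u)), (FF_M _ (lo_m_M hV v)).
  unfold FF at 1.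
  rewrite (Gext _ _ _ (E_comp A E M hV _ _ H1c (up_e_E hV f) (up_e_E hV u)) Hue).
  rewrite (Hext _ _ _ (M_comp A E M hV _ _ H1l (lo_m_M hV f) (lo_m_M hV v)) Hlm).
  rewrite G_comp with (hf := up_e_E hV f) (hg := up_e_E hV u) by exact H1c.
  rewrite H_comp with (hf := lo_m_M hV f) (hg := lo_m_M hV v) by exact H1l.
  unfold FF. apply assoc4.
  - rewrite (proj2 (H_dc _ _)), (proj1 (H_dc _ _)). rewrite <- H1l. auto.
  - rewrite (proj2 (H_dc _ _)), (proj1 (G_dc _ _)), lo_dom, up_dom; auto.
  - rewrite (proj2 (G_dc _ _)), (proj1 (G_dc _ _)). rewrite <- H1c. auto.
Qed.

Lemma FF_comp2 f g : cod f = dom g ->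
  FF (comp g f) = comp (FF (up_m hV (comp (up_e hV g) (up_m hV f))))
            (comp (FF g) (FF (lo_e hV (comp (lo_m hV g) (lo_e hV f))))).
Proof.
  intros Hfg.
  pose proof (up_gf A E M hV f g Hfg) as Hup. pose proof (lo_gf A E M hV f g Hfg) as Hlo.
  cbv zeta in Hup, Hlo. destruct Hup as [_ Hum]. destruct Hlo as [_ Hle].
  set (u := comp (up_e hV g) (up_m hV f)) in *.
  set (v := comp (lo_m hV g) (lo_e hV f)) in *.
  assert (Hu1 : cod (up_m hV f) = dom (up_e hV g)) by (rewrite up_codm, up_dom; auto).
  assert (Hcu : cod u = cod (up_e hV g)) by (apply cod_comp; auto).
  assert (H2c : cod (up_m hV u) = dom (up_m hV g)) by (rewrite up_codm, Hcu; apply up_cod).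
  assert (Hl1 : cod (lo_e hV f) = dom (lo_m hV g)) by (rewrite lo_code, lo_dom; auto).
  assert (Hcv : cod v = cod (lo_m hV g)) by (apply cod_comp; auto).
  assert (H2l : cod (lo_e hV v) = dom (lo_e hV g)) by (rewrite lo_code, Hcv; apply lo_cod).
  rewrite (FF_M _ (up_m_M hV u)), (FF_E _ (lo_e_E hV v)).
  rewrite !FF_alt.
  rewrite (Hext _ _ _ (M_comp A E M hV _ _ H2c (up_m_M hV u) (up_m_M hV g)) Hum).
  rewrite (Gext _ _ _ (E_comp A E M hV _ _ H2l (lo_e_E hV v) (lo_e_E hV g)) Hle).
  rewrite H_comp with (hf := up_m_M hV u) (hg := up_m_M hV g) by exact H2c.
  rewrite G_comp with (hf := lo_e_E hV v) (hg := lo_e_E hV g) by exact H2l.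
  apply assoc4.
  - rewrite (proj2 (G_dc _ _)), (proj1 (G_dc _ _)). rewrite <- H2l. auto.
  - rewrite (proj2 (G_dc _ _)), (proj1 (H_dc _ _)), lo_code, up_codm; auto.
  - rewrite (proj2 (H_dc _ _)), (proj1 (H_dc _ _)). rewrite <- H2c. auto.
Qed.

Lemma FF_var : IsVarFunctor hV O FF.
Proof.
  split; [|split].
  - intros x. rewrite (FF_E _ (E_id A E M hV x)). apply G_id.
  - intros f. unfold FF, obj_s, obj_t. rewrite dom_comp, cod_comp.
    + rewrite (proj1 (H_dc _ _)), (proj2 (G_dc _ _)). auto.
    + rewrite (proj2 (H_dc _ _)), (proj1 (G_dc _ _)), lo_dom, up_dom; auto.
    + rewrite (proj2 (H_dc _ _)), (proj1 (G_dc _ _)), lo_dom, up_dom; auto.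
  - intros f g Hfg. split.
    + apply FF_comp1; auto.
    + apply FF_comp2; auto.
Qed.
End Bwd.

Theorem mainTheorem2 (A C : Cat) (E M : Mor A -> Prop) (hV : Variance A E M) :
  (* F |-> (F|_E, F|_M) lands in compatible pairs *)
  (forall (F0 : Ob A -> Ob C) (F1 : Mor A -> Mor C),
     IsVarFunctor hV F0 F1 ->
     IsCovFunctor E F0 (restr E F1) /\
     IsContraFunctor M F0 (restr M F1) /\
     IsCompatiblePair hV F0 (restr E F1) (restr M F1)) /\
  (* injectivity *)
  (forall (F0 F0' : Ob A -> Ob C) (F1 F1' : Mor A -> Mor C),
     IsVarFunctor hV F0 F1 -> IsVarFunctor hV F0' F1' ->
     (F0, restr E F1, restr M F1) = (F0', restr E F1', restr M F1') ->
     F0 = F0' /\ F1 = F1') /\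
  (* surjectivity onto compatible pairs *)
  (forall (O : Ob A -> Ob C) (G1 : {f : Mor A | E f} -> Mor C)
          (H1 : {f : Mor A | M f} -> Mor C),
     IsCompatiblePair hV O G1 H1 ->
     exists (F0 : Ob A -> Ob C) (F1 : Mor A -> Mor C),
       IsVarFunctor hV F0 F1 /\ (F0, restr E F1, restr M F1) = (O, G1, H1)).
Proof.
  split; [|split].
  - intros F0 F1 HF.
    assert (Hcov : IsCovFunctor E F0 (restr E F1)).
    { split; [|split].
      - intros [a ha]; unfold restr; simpl. apply (FE_dc A C E M hV F0 F1 HF a ha).
      - intros x hx; unfold restr; simpl. apply (proj1 HF).
      - intros f g hf hg hgf Hfg; unfold restr; simpl.
        destruct HF as [Hid [Hdc Hcomp]].
        rewrite (proj1 (Hcomp f g Hfg)).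
        destruct (up_E A E M hV g hg) as [Hg1 _]. destruct (up_E A E M hV f hf) as [_ Hf1].
        destruct (lo_E A E M hV g hg) as [Hg2 _]. destruct (lo_E A E M hV f hf) as [Hf2 Hf3].
        rewrite Hg1, Hf1, Hg2, Hf3, (comp_idr' A g (cod f)), Hg1, (comp_idl' A f (dom g)), Hf2, Hid; auto.
        rewrite comp_idr'; auto.
        apply (FE_dc A C E M hV F0 F1 (conj Hid (conj Hdc Hcomp)) f hf). }
    assert (Hcon : IsContraFunctor M F0 (restr M F1)).
    { split; [|split].
      - intros [a ha]; unfold restr; simpl. apply (FM_dc A C E M hV F0 F1 HF a ha).
      - intros x hx; unfold restr; simpl. apply (proj1 HF).
      - intros f g hf hg hgf Hfg; unfold restr; simpl.
        destruct HF as [Hid [Hdc Hcomp]].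
        rewrite (proj2 (Hcomp f g Hfg)).
        destruct (up_M A E M hV g hg) as [Hg1 _]. destruct (up_M A E M hV f hf) as [_ Hf1].
        destruct (lo_M A E M hV g hg) as [Hg2 Hg3]. destruct (lo_M A E M hV f hf) as [_ Hf3].
        rewrite Hg1, Hf1, Hg2, Hf3, (comp_idl' A f (dom g)), Hf1, (comp_idr' A g (cod f)), Hg3, Hid; auto.
        rewrite comp_idr'; auto.
        apply (FM_dc A C E M hV F0 F1 (conj Hid (conj Hdc Hcomp)) g hg). }
    split; [exact Hcov|split; [exact Hcon|]].
    split; [exact Hcov|split; [exact Hcon|]].
    intros f; unfold restr; simpl.
    rewrite <- (F_decomp1 A C E M hV F0 F1 HF), <- (F_decomp2 A C E M hV F0 F1 HF). reflexivity.
  - intros F0 F0' F1 F1' HF HF' Heq.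
    injection Heq as H0 HE HM. split; auto.
    apply functional_extensionality. intros f.
    rewrite (F_decomp1 A C E M hV F0 F1 HF), (F_decomp1 A C E M hV F0' F1' HF').
    f_equal.
    + exact (f_equal (fun h => h (exist _ (up_e hV f) (up_e_E hV f))) HE).
    + exact (f_equal (fun h => h (exist _ (lo_m hV f) (lo_m_M hV f))) HM).
  - intros O G1 H1 HP.
    exists O, (FF A C E M hV G1 H1).
    split; [apply FF_var; exact HP|].
    f_equal; [f_equal|].
    + apply functional_extensionality. intros [a ha]. unfold restr; simpl. apply (FF_E A C E M hV O G1 H1 HP).
    + apply functional_extensionality. intros [a ha]. unfold restr; simpl. apply (FF_M A C E M hV O G1 H1 HP).
Qed.
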